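(* Let $\mathcal{X}\subseteq\mathcal{P}(\mathbb{N})$ be closed under enumeration equivalence. If $f\colon\mathcal{X}\to\mathcal{P}(\mathbb{N})$ is uniformly $e$-invariant, then $f$ has a computable uniformity function.
   Context: Enumeration reducibility: for $A,B\subseteq\mathbb{N}$, $A\le_e B$ if $A=\Gamma(B):=\{n:\exists D\subseteq B,\ \langle n,D\rangle\in\Gamma\}$ for some c.e. set $\Gamma$ of pairs $\langle n,D\rangle$ with $D$ finite (canonical index); $(\Gamma_i)_{i\in\mathbb{N}}$ is the standard computable numbering of these enumeration operators. $A\equiv_e B$ iff $A\le_e B\le_e A$. Let $\mathcal{X}\subseteq\mathcal{P}(\mathbb{N})$ be closed under $\equiv_e$. A function $f\colon\mathcal{X}\to\mathcal{P}(\mathbb{N})$ is $e$-invariant if $A\equiv_e B$ implies $f(A)\equiv_e f(B)$. Write $A\equiv_e B$ via $\langle i,j\rangle$ if $\Gamma_i(A)=B$ and $\Gamma_j(B)=A$ (with $\langle\cdot,\cdot\rangle$ a fixed computable pairing bijection). A function $u\colon\mathbb{N}\to\mathbb{N}$ is a uniformity function for $f$ if for all $A,B\in\mathcal{X}$ and all $i,j$, whenever $A\equiv_e B$ via $\langle i,j\rangle$ then $f(A)\equiv_e f(B)$ via $u(\langle i,j\rangle)$. $f$ is uniformly $e$-invariant if it has some uniformity function. *)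

(* Defs.v *)
From Stdlib Require Import Arith.

Definition cpair (i j : nat) : nat := (i + j) * (i + j + 1) / 2 + j.

(* Codes of unary partial recursive functions *)
Inductive code : Type :=
| CZero : code
| CSucc : code
| CProj1 : code
| CProj2 : code
| CPair : code -> code -> code
| CComp : code -> code -> code
| CPrim : code -> code -> code      (* h <x,0> = f x ; h <x,n+1> = g <x,<n,h <x,n>>> *)
| CMu : code -> code.               (* x |-> least n with f <x,n> = 0 (all earlier defined) *)

Inductive eval : code -> nat -> nat -> Prop :=
| ev_zero : forall x, eval CZero x 0
| ev_succ : forall x, eval CSucc x (S x)
| ev_proj1 : forall a b, eval CProj1 (cpair a b) a
| ev_proj2 : forall a b, eval CProj2 (cpair a b) b
| ev_pair : forall f g x a b, eval f x a -> eval g x b -> eval (CPair f g) x (cpair a b)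
| ev_comp : forall f g x a y, eval g x a -> eval f a y -> eval (CComp f g) x y
| ev_prim0 : forall f g x y, eval f x y -> eval (CPrim f g) (cpair x 0) y
| ev_primS : forall f g x n r y,
    eval (CPrim f g) (cpair x n) r -> eval g (cpair x (cpair n r)) y ->
    eval (CPrim f g) (cpair x (S n)) y
| ev_mu : forall f x n,
    eval f (cpair x n) 0 ->
    (forall m, m < n -> exists k, eval f (cpair x m) (S k)) ->
    eval (CMu f) x n.

(* Goedel numbering of codes (injective); numbers not of the form
   [encode c] index the everywhere-undefined function. *)
Fixpoint encode (c : code) : nat :=
  match c with
  | CZero => cpair 0 0
  | CSucc => cpair 1 0
  | CProj1 => cpair 2 0
  | CProj2 => cpair 3 0
  | CPair f g => cpair 4 (cpair (encode f) (encode g))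
  | CComp f g => cpair 5 (cpair (encode f) (encode g))
  | CPrim f g => cpair 6 (cpair (encode f) (encode g))
  | CMu f => cpair 7 (encode f)
  end.

Definition phi (e x y : nat) : Prop := exists c, encode c = e /\ eval c x y.

Definition computable (u : nat -> nat) : Prop :=
  exists c : code, forall n, eval c n (u n).

Definition eset := nat -> Prop.

Definition W (e : nat) : eset := fun x => exists y, phi e x y.

(* D_u : finite set with canonical index u (binary expansion) *)
Definition canon (u : nat) : eset := fun k => Nat.testbit u k = true.

Definition Gamma (e : nat) (A : eset) : eset :=
  fun n => exists u, W e (cpair n u) /\ (forall k, canon u k -> A k).

Definition ered (A B : eset) : Prop := exists i, Gamma i B = A.
Definition eequiv (A B : eset) : Prop := ered A B /\ ered B A.

Definition eequiv_via (A B : eset) (ij : nat) : Prop :=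
  exists i j, ij = cpair i j /\ Gamma i A = B /\ Gamma j B = A.

Definition closed_eequiv (X : eset -> Prop) : Prop :=
  forall A B, X A -> eequiv A B -> X B.

Definition uniformity_function (X : eset -> Prop) (f : eset -> eset)
    (u : nat -> nat) : Prop :=
  forall A B i j, X A -> X B -> eequiv_via A B (cpair i j) ->
    eequiv_via (f A) (f B) (u (cpair i j)).

Definition uniformly_e_invariant (X : eset -> Prop) (f : eset -> eset) : Prop :=
  exists u, uniformity_function X f u.

(* Main.v *)
Require Import Defs.
From Stdlib Require Import Arith Lia List Bool Setoid Morphisms FunctionalExtensionality PropExtensionality.
Import ListNotations.

Definition tri (k : nat) := k * (k + 1) / 2.

Lemma tri_S k : tri (S k) = tri k + S k.
Proof.
  unfold tri.
  replace (S k * (S k + 1)) with (k * (k+1) + S k * 2) by lia.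
  rewrite Nat.div_add by lia. reflexivity.
Qed.

Lemma cpair_tri i j : cpair i j = tri (i + j) + j.
Proof. reflexivity. Qed.

Lemma tri_mono a b : a <= b -> tri a <= tri b.
Proof.
  induction 1; auto. rewrite tri_S. lia.
Qed.

Lemma cpair_lt a b c d : a + b < c + d -> cpair a b < cpair c d.
Proof.
  intro H. rewrite !cpair_tri.
  assert (tri (S (a+b)) <= tri (c+d)) by (apply tri_mono; lia).
  rewrite tri_S in H0. lia.
Qed.

Lemma cpair_inj a b c d : cpair a b = cpair c d -> a = c /\ b = d.
Proof.
  intro H.
  destruct (lt_eq_lt_dec (a+b) (c+d)) as [[h|h]|h].
  - apply cpair_lt in h. lia.
  - rewrite !cpair_tri in H. rewrite h in H. lia.
  - apply cpair_lt in h. lia.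
Qed.

Fixpoint unpair (x : nat) : nat * nat :=
  match x with
  | 0 => (0, 0)
  | S x' => let (a, b) := unpair x' in
            match a with 0 => (S b, 0) | S a' => (a', S b) end
  end.

Definition p1 x := fst (unpair x).
Definition p2 x := snd (unpair x).

Lemma cpair_unpair x : cpair (p1 x) (p2 x) = x.
Proof.
  unfold p1, p2. induction x as [|x IH]; [reflexivity|].
  simpl. destruct (unpair x) as [a b]. simpl in *.
  destruct a as [|a].
  - rewrite !cpair_tri in *. simpl fst; simpl snd. replace (S b + 0) with (S b) by lia. rewrite tri_S. simpl in IH. lia.
  - rewrite !cpair_tri in *. simpl fst; simpl snd. replace (a + S b) with (S a + b) by lia. lia.
Qed.

Lemma p1_cpair a b : p1 (cpair a b) = a.
Proof.
  pose proof (cpair_unpair (cpair a b)). apply cpair_inj in H. tauto.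
Qed.
Lemma p2_cpair a b : p2 (cpair a b) = b.
Proof.
  pose proof (cpair_unpair (cpair a b)). apply cpair_inj in H. tauto.
Qed.

Lemma unpair_cpair a b : unpair (cpair a b) = (a, b).
Proof.
  pose proof (p1_cpair a b); pose proof (p2_cpair a b). unfold p1, p2 in *.
  destruct (unpair (cpair a b)); simpl in *; subst; auto.
Qed.

Global Opaque cpair.

Fixpoint primF (f : nat -> nat) (g : nat -> nat) (x0 n : nat) : nat :=
  match n with 0 => f x0 | S m => g (cpair x0 (cpair m (primF f g x0 m))) end.

Fixpoint den (c : code) (x : nat) : nat :=
  match c with
  | CZero => 0
  | CSucc => S x
  | CProj1 => p1 x
  | CProj2 => p2 x
  | CPair f g => cpair (den f x) (den g x)
  | CComp f g => den f (den g x)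
  | CPrim f g => primF (den f) (den g) (p1 x) (p2 x)
  | CMu _ => 0
  end.

Fixpoint mufree (c : code) : Prop :=
  match c with
  | CPair f g | CComp f g | CPrim f g => mufree f /\ mufree g
  | CMu _ => False
  | _ => True
  end.

Lemma eval_den c x : mufree c -> eval c x (den c x).
Proof.
  revert x; induction c; simpl; intros x Hm; try tauto.
  - constructor.
  - constructor.
  - rewrite <- (cpair_unpair x) at 1. constructor.
  - rewrite <- (cpair_unpair x) at 1. constructor.
  - apply ev_pair; [apply IHc1|apply IHc2]; tauto.
  - econstructor; [apply IHc2|apply IHc1]; tauto.
  - destruct Hm as [H1 H2].
    rewrite <- (cpair_unpair x) at 1. generalize (p2 x) as n. intro n.
    induction n; simpl.
    + constructor; auto.
    + econstructor; eauto.
Qed.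

Lemma eval_det c x y : mufree c -> eval c x y -> y = den c x.
Proof.
  intros Hm H; induction H; simpl in *;
    rewrite ?p1_cpair, ?p2_cpair; try tauto.
  - destruct Hm. f_equal; auto.
  - destruct Hm. rewrite IHeval2, IHeval1 by auto. auto.
  - destruct Hm. rewrite IHeval2 by auto.
    rewrite IHeval1 by auto.
    rewrite p1_cpair, p2_cpair. reflexivity.
Qed.

Lemma eval_mufree c x y : mufree c -> (eval c x y <-> y = den c x).
Proof. intros; split; [apply eval_det; auto| intros ->; apply eval_den; auto]. Qed.

Inductive exp : Type :=
| Var (k : nat) | Cst (n : nat) | Suc (e : exp) | Prd (e : exp)
| Pr (a b : exp) | Fs (e : exp) | Sn (e : exp)
| If0 (c a b : exp) | Iter (cnt init step : exp) | Bex (bound body : exp)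
| Let (a body : exp).

Fixpoint iterF (n i : nat) (s : nat -> nat -> nat) : nat :=
  match n with 0 => i | S m => s m (iterF m i s) end.

Fixpoint bexF (n : nat) (f : nat -> nat) : nat :=
  match n with
  | 0 => 0
  | S m => match bexF m f with 0 => match f m with 0 => 0 | _ => 1 end | _ => 1 end
  end.

Fixpoint evalx (e : exp) (env : list nat) : nat :=
  match e with
  | Var k => nth k env 0
  | Cst n => n
  | Suc e => S (evalx e env)
  | Prd e => pred (evalx e env)
  | Pr a b => cpair (evalx a env) (evalx b env)
  | Fs e => p1 (evalx e env)
  | Sn e => p2 (evalx e env)
  | If0 c a b => match evalx c env with 0 => evalx a env | _ => evalx b env end
  | Iter cnt init step =>
      iterF (evalx cnt env) (evalx init env) (fun m r => evalx step (r :: m :: env))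
  | Bex bound body => bexF (evalx bound env) (fun m => evalx body (m :: env))
  | Let a body => evalx body (evalx a env :: env)
  end.

Fixpoint encenv (l : list nat) : nat :=
  match l with [] => 0 | v :: l => cpair v (encenv l) end.

Fixpoint constc (n : nat) : code :=
  match n with 0 => CZero | S m => CComp CSucc (constc m) end.

Fixpoint getk (k : nat) : code :=
  match k with 0 => CProj1 | S k => CComp (getk k) CProj2 end.

Definition CId := CPair CProj1 CProj2.
Definition CPred := CComp (CPrim CZero (CComp CProj1 CProj2)) (CPair CZero CId).
(* input cpair r v : if r = 0 then (if v = 0 then 0 else 1) else 1 *)
Definition CBstep := CComp (CPrim (CComp (CPrim CZero (CComp (CComp CSucc CZero) CProj1))
                                          (CPair CId CProj2))
                                  (CComp (CComp CSucc CZero) CProj1))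
                           (CPair CId CProj1).

Fixpoint compile (e : exp) : code :=
  match e with
  | Var k => getk k
  | Cst n => constc n
  | Suc e => CComp CSucc (compile e)
  | Prd e => CComp CPred (compile e)
  | Pr a b => CPair (compile a) (compile b)
  | Fs e => CComp CProj1 (compile e)
  | Sn e => CComp CProj2 (compile e)
  | If0 c a b => CComp (CPrim (compile a) (CComp (compile b) CProj1)) (CPair CId (compile c))
  | Iter cnt init step =>
      CComp (CPrim (compile init)
                   (CComp (compile step)
                          (CPair (CComp CProj2 CProj2) (CPair (CComp CProj1 CProj2) CProj1))))
            (CPair CId (compile cnt))
  | Bex bound body =>
      CComp (CPrim CZero
                   (CComp CBstep (CPair (CComp CProj2 CProj2)
                                        (CComp (compile body) (CPair (CComp CProj1 CProj2) CProj1)))))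
            (CPair CId (compile bound))
  | Let a body => CComp (compile body) (CPair (compile a) CId)
  end.

Lemma den_CId x : den CId x = x.
Proof. apply cpair_unpair. Qed.

Lemma den_constc n x : den (constc n) x = n.
Proof. induction n; simpl; auto. Qed.

Lemma mufree_constc n : mufree (constc n).
Proof. induction n; simpl; auto. Qed.

Ltac norm := repeat progress (rewrite ?p1_cpair, ?p2_cpair, ?cpair_unpair).

Lemma p1_0 : p1 0 = 0. Proof. reflexivity. Qed.
Lemma p2_0 : p2 0 = 0. Proof. reflexivity. Qed.

Lemma den_getk k l : den (getk k) (encenv l) = nth k l 0.
Proof.
  revert l; induction k; intros [|v l]; simpl; norm; auto.
  - change (den (getk k) 0 = 0). specialize (IHk []). simpl in IHk. destruct k; exact IHk.
Qed.

Lemma mufree_getk k : mufree (getk k).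
Proof. induction k; simpl; auto. Qed.

Lemma den_CPred x : den CPred x = pred x.
Proof.
  unfold CPred. simpl. rewrite !p1_cpair, !p2_cpair, !cpair_unpair.
  destruct x; simpl; auto. rewrite p2_cpair, p1_cpair. reflexivity.
Qed.

Lemma den_CBstep r v : den CBstep (cpair r v) =
  match r with 0 => match v with 0 => 0 | _ => 1 end | _ => 1 end.
Proof.
  unfold CBstep. simpl. norm.
  destruct r; simpl; norm; auto.
  destruct v; simpl; norm; auto.
Qed.

Lemma mufree_aux : mufree CId /\ mufree CPred /\ mufree CBstep.
Proof. unfold CId, CPred, CBstep; simpl; tauto. Qed.

Global Opaque CId CPred CBstep.
Ltac norm2 := repeat progress (rewrite ?p1_cpair, ?p2_cpair, ?cpair_unpair, ?den_CId).

Lemma compile_correct e l : den (compile e) (encenv l) = evalx e l.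
Proof.
  revert l; induction e; intro l; simpl.
  - apply den_getk.
  - apply den_constc.
  - rewrite IHe; auto.
  - rewrite den_CPred, IHe; auto.
  - rewrite IHe1, IHe2; auto.
  - rewrite IHe; auto.
  - rewrite IHe; auto.
  - norm2. rewrite IHe1. destruct (evalx e1 l); simpl.
    + apply IHe2.
    + rewrite p1_cpair. apply IHe3.
  - norm2. rewrite IHe1.
    generalize (evalx e1 l) as n; intro n. induction n; simpl.
    + apply IHe2.
    + norm2. rewrite <- IHn. norm2.
      match goal with |- den _ _ = evalx _ (?X :: ?n :: ?l) => exact (IHe3 (X::n::l)) end.
  - norm2. rewrite IHe1.
    generalize (evalx e1 l) as n; intro n. induction n; simpl; auto.
    norm2.
    rewrite IHn, den_CBstep. exact (f_equal (fun v => match bexF n (fun m => evalx e2 (m :: l)) with 0 => match v with 0 => 0 | S _ => 1 end | S _ => 1 end) (IHe2 (n :: l))).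

  - norm2. change (cpair (den (compile e1) (encenv l)) (encenv l)) with
      (encenv (den (compile e1) (encenv l) :: l)). rewrite IHe2, IHe1. reflexivity.
Qed.

Lemma mufree_compile e : mufree (compile e).
Proof.
  pose proof mufree_aux. induction e; simpl; auto using mufree_getk, mufree_constc; tauto.
Qed.

Definition nz (n : nat) : bool := negb (n =? 0).

Definition Add a b := Iter b a (Suc (Var 0)).
Definition Sub a b := Iter b a (Prd (Var 0)).
Definition Eqn a b := If0 (Add (Sub a b) (Sub b a)) (Cst 1) (Cst 0).
Definition Not a := If0 a (Cst 1) (Cst 0).
Definition And a b := If0 a (Cst 0) (If0 b (Cst 0) (Cst 1)).
Definition Or a b := If0 a (If0 b (Cst 0) (Cst 1)) (Cst 1).
Definition Imp a b := If0 a (Cst 1) (If0 b (Cst 0) (Cst 1)).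
Definition Ball n body := Not (Bex n (Not body)).
Definition Odd x := Iter x (Cst 0) (If0 (Var 0) (Cst 1) (Cst 0)).
Definition Div2 x := Fs (Iter x (Pr (Cst 0) (Cst 0))
   (If0 (Sn (Var 0)) (Pr (Fs (Var 0)) (Cst 1)) (Pr (Suc (Fs (Var 0))) (Cst 0)))).
Definition Tb d k := Odd (Iter k d (Div2 (Var 0))).
Definition Look s p := Fs (Iter p s (Sn (Var 0))).
Definition Dbl x := Add x x.

Definition lookF (s p : nat) : nat := p1 (iterF p s (fun _ r => p2 r)).

Section L.
Variable env : list nat.
Notation ev e := (evalx e env).

Lemma ev_Add a b : ev (Add a b) = ev a + ev b.
Proof. unfold Add; simpl. induction (ev b); simpl; lia. Qed.

Lemma ev_Sub a b : ev (Sub a b) = ev a - ev b.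
Proof. unfold Sub; simpl. induction (ev b); simpl; [lia|]. rewrite IHn; lia. Qed.

Lemma ev_Eqn a b : ev (Eqn a b) = Nat.b2n (ev a =? ev b).
Proof.
  unfold Eqn. cbn [evalx]. rewrite ev_Add, !ev_Sub.
  destruct (ev a =? ev b) eqn:E.
  - apply Nat.eqb_eq in E. rewrite E. replace (ev b - ev b + (ev b - ev b)) with 0 by lia. reflexivity.
  - apply Nat.eqb_neq in E. destruct (ev a - ev b + (ev b - ev a)) eqn:F; [lia|reflexivity].
Qed.

Lemma ev_Not a : ev (Not a) = Nat.b2n (negb (nz (ev a))).
Proof. unfold Not, nz; simpl. destruct (ev a); reflexivity. Qed.

Lemma ev_And a b : ev (And a b) = Nat.b2n (nz (ev a) && nz (ev b)).
Proof. unfold And, nz; simpl. destruct (ev a), (ev b); reflexivity. Qed.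

Lemma ev_Or a b : ev (Or a b) = Nat.b2n (nz (ev a) || nz (ev b)).
Proof. unfold Or, nz; simpl. destruct (ev a), (ev b); reflexivity. Qed.

Lemma ev_Imp a b : ev (Imp a b) = Nat.b2n (implb (nz (ev a)) (nz (ev b))).
Proof. unfold Imp, nz; simpl. destruct (ev a), (ev b); reflexivity. Qed.

Lemma bexF_spec n f : bexF n f = Nat.b2n (existsb (fun m => nz (f m)) (seq 0 n)).
Proof.
  induction n; [reflexivity|]. cbn [bexF]. rewrite IHn, seq_S, existsb_app. simpl.
  destruct (existsb (fun m => nz (f m)) (seq 0 n)); simpl; auto.
  unfold nz. destruct (f n); reflexivity.
Qed.

Lemma ev_Bex n body : ev (Bex n body) =
  Nat.b2n (existsb (fun m => nz (evalx body (m :: env))) (seq 0 (ev n))).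
Proof. simpl. apply bexF_spec. Qed.

Lemma ev_Ball n body : ev (Ball n body) =
  Nat.b2n (forallb (fun m => nz (evalx body (m :: env))) (seq 0 (ev n))).
Proof.
  unfold Ball. rewrite ev_Not. cbn [evalx]. rewrite bexF_spec.
  f_equal. induction (seq 0 (ev n)); simpl; auto.
  rewrite <- IHl. cbn [evalx]. unfold nz at 2. fold (Not body).
  change (evalx (Not body) (a :: env)) with (evalx (Not body) (a :: env)).
  unfold Not at 1. cbn [evalx].
  unfold nz; destruct (evalx body (a :: env)); simpl;
  destruct (existsb _ l); reflexivity.
Qed.

Lemma ev_Odd x : ev (Odd x) = Nat.b2n (Nat.odd (ev x)).
Proof.
  unfold Odd; simpl. induction (ev x); simpl; auto.
  rewrite IHn, Nat.odd_succ, <- Nat.negb_odd. destruct (Nat.odd n); reflexivity.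
Qed.

Lemma div2_step n : iterF n (cpair 0 0)
   (fun m r => evalx (If0 (Sn (Var 0)) (Pr (Fs (Var 0)) (Cst 1)) (Pr (Suc (Fs (Var 0))) (Cst 0))) (r :: m :: env))
   = cpair (Nat.div2 n) (Nat.b2n (Nat.odd n)).
Proof.
  induction n; [reflexivity|].
  cbn [iterF]. rewrite IHn. cbn [evalx nth]. rewrite p1_cpair, p2_cpair.
  pose proof (Nat.div2_odd n) as H1. pose proof (Nat.div2_odd (S n)) as H2.
  rewrite Nat.odd_succ, <- Nat.negb_odd in *.
  destruct (Nat.odd n); simpl in *; f_equal; lia.
Qed.

Lemma ev_Div2 x : ev (Div2 x) = Nat.div2 (ev x).
Proof. unfold Div2. cbn [evalx]. rewrite div2_step, p1_cpair. reflexivity. Qed.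

Lemma iterF_shift k d (g : nat -> nat) :
  iterF (S k) d (fun _ r => g r) = iterF k (g d) (fun _ r => g r).
Proof. induction k; [reflexivity|]. cbn [iterF] in *. rewrite IHk. reflexivity. Qed.

End L.
Lemma ev_Tb env d k : evalx (Tb d k) env = Nat.b2n (Nat.testbit (evalx d env) (evalx k env)).
Proof.
  unfold Tb. rewrite ev_Odd. cbn [evalx].
  assert (E : forall n a, iterF n a (fun m r => evalx (Div2 (Var 0)) (r :: m :: env)) =
                         iterF n a (fun _ r => Nat.div2 r)).
  { induction n; intro a; [reflexivity|]. cbn [iterF]. rewrite IHn. rewrite ev_Div2. reflexivity. }
  rewrite E. generalize (evalx d env) as a. induction (evalx k env) as [|n IH]; intro a; simpl; auto.
  rewrite <- IH. f_equal. f_equal. apply (iterF_shift n a Nat.div2).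
Qed.

Section L2.
Variable env : list nat.
Notation ev e := (evalx e env).
Lemma ev_Look s p : ev (Look s p) = lookF (ev s) (ev p).
Proof. reflexivity. Qed.

Lemma ev_Dbl x : ev (Dbl x) = 2 * ev x.
Proof. unfold Dbl. rewrite ev_Add. lia. Qed.

End L2.

Lemma nz_b2n b : nz (Nat.b2n b) = b.
Proof. destruct b; reflexivity. Qed.

Global Opaque Add Sub Eqn Not And Or Imp Ball Odd Div2 Tb Look Dbl.

#[export] Hint Rewrite ev_Add ev_Sub ev_Eqn ev_Not ev_And ev_Or ev_Imp ev_Bex ev_Ball ev_Odd
  ev_Div2 ev_Tb ev_Look ev_Dbl nz_b2n : evx.

Fixpoint lift (c : nat) (e : exp) : exp :=
  match e with
  | Var k => if c <=? k then Var (S k) else Var k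
  | Cst n => Cst n
  | Suc e => Suc (lift c e)
  | Prd e => Prd (lift c e)
  | Pr a b => Pr (lift c a) (lift c b)
  | Fs e => Fs (lift c e)
  | Sn e => Sn (lift c e)
  | If0 a b d => If0 (lift c a) (lift c b) (lift c d)
  | Iter a b d => Iter (lift c a) (lift c b) (lift (S (S c)) d)
  | Bex a b => Bex (lift c a) (lift (S c) b)
  | Let a b => Let (lift c a) (lift (S c) b)
  end.

Definition ins (c v : nat) (env : list nat) := firstn c env ++ v :: skipn c env.

Lemma ins_S c v m env : ins (S c) v (m :: env) = m :: ins c v env.
Proof. reflexivity. Qed.

Lemma iterF_ext n i s1 s2 : (forall m r, s1 m r = s2 m r) -> iterF n i s1 = iterF n i s2.
Proof. intro H; induction n; simpl; auto. rewrite IHn; auto. Qed.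

Lemma bexF_ext n f1 f2 : (forall m, f1 m = f2 m) -> bexF n f1 = bexF n f2.
Proof. intro H; induction n; simpl; auto. rewrite IHn, H; auto. Qed.

Lemma lift_correct e : forall c env v, c <= length env ->
  evalx (lift c e) (ins c v env) = evalx e env.
Proof.
  induction e; intros c env v Hc; simpl;
    try (rewrite ?IHe, ?IHe1, ?IHe2, ?IHe3 by auto; reflexivity).
  - unfold ins. destruct (c <=? k) eqn:E.
    + apply Nat.leb_le in E. simpl. rewrite app_nth2; rewrite firstn_length_le by auto; [|lia].
      replace (S k - c) with (S (k - c)) by lia. simpl.
      rewrite <- (firstn_skipn c env) at 2. rewrite app_nth2; rewrite firstn_length_le by auto; auto.
    + apply Nat.leb_gt in E. cbn [evalx]. rewrite app_nth1 by (rewrite firstn_length_le; lia).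
      rewrite <- (firstn_skipn c env) at 2. rewrite app_nth1 by (rewrite firstn_length_le; lia). auto.
  - rewrite IHe1, IHe2 by auto. apply iterF_ext. intros m r.
    rewrite <- !ins_S. apply IHe3. simpl; lia.
  - rewrite IHe1 by auto. apply bexF_ext. intro m. rewrite <- ins_S. apply IHe2. simpl; lia.
  - rewrite IHe1 by auto. rewrite <- ins_S. apply IHe2. simpl; lia.
Qed.

Definition l1 := lift 0.
Lemma ev_l1 e v env : evalx (l1 e) (v :: env) = evalx e env.
Proof. apply (lift_correct e 0 env v). lia. Qed.
Global Opaque l1.

Definition T (e : exp) (env : list nat) : Prop := evalx e env <> 0.

Lemma b2n_ne0 b : Nat.b2n b <> 0 <-> b = true.
Proof. destruct b; simpl; split; intros; try discriminate; auto. Qed.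

Lemma nz_true n : nz n = true <-> n <> 0.
Proof. unfold nz. destruct n; simpl; split; congruence. Qed.

Section TL.
Variable env : list nat.
Lemma T_And a b : T (And a b) env <-> T a env /\ T b env.
Proof. unfold T. rewrite ev_And, b2n_ne0, andb_true_iff, !nz_true. tauto. Qed.
Lemma T_Or a b : T (Or a b) env <-> T a env \/ T b env.
Proof. unfold T. rewrite ev_Or, b2n_ne0, orb_true_iff, !nz_true. tauto. Qed.
Lemma T_Not a : T (Not a) env <-> ~ T a env.
Proof. unfold T. rewrite ev_Not, b2n_ne0, negb_true_iff. unfold nz.
  destruct (evalx a env); simpl; split; intro H; try discriminate; try (exfalso; apply H; discriminate); auto. Qed.
Lemma T_Eqn a b : T (Eqn a b) env <-> evalx a env = evalx b env.
Proof. unfold T. rewrite ev_Eqn, b2n_ne0, Nat.eqb_eq. tauto. Qed.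
Lemma T_Bex n body : T (Bex n body) env <-> exists m, m < evalx n env /\ T body (m :: env).
Proof.
  unfold T. rewrite ev_Bex, b2n_ne0, existsb_exists.
  split; intros [m [H1 H2]]; exists m; rewrite in_seq in *; rewrite nz_true in *; split; auto; lia.
Qed.
Lemma T_Ball n body : T (Ball n body) env <-> forall m, m < evalx n env -> T body (m :: env).
Proof.
  unfold T. rewrite ev_Ball, b2n_ne0, forallb_forall.
  split; intros H m Hm; [rewrite <- nz_true; apply H; rewrite in_seq; lia|].
  rewrite in_seq in Hm. rewrite nz_true. apply H. lia.
Qed.
End TL.

Definition Mem (S p tgt : exp) := Bex p (Eqn (Look (l1 S) (Var 0)) (l1 tgt)).

Lemma T_Mem env S p tgt : T (Mem S p tgt) env <->
  exists q, q < evalx p env /\ lookF (evalx S env) q = evalx tgt env.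
Proof.
  unfold Mem. rewrite T_Bex. setoid_rewrite T_Eqn. setoid_rewrite ev_Look.
  setoid_rewrite ev_l1. reflexivity.
Qed.
Global Opaque Mem.

Definition jE a b c := cpair 0 (cpair a (cpair b c)).
Definition cE a := cpair 1 (cpair a (cpair 0 0)).

Definition validE (J : nat) (E : (nat -> Prop) -> Prop) : Prop :=
  let k := p1 J in let e' := p1 (p2 J) in let x' := p1 (p2 (p2 J)) in
  let y := p2 (p2 (p2 J)) in let t := p1 e' in let r := p2 e' in
  let M tgt := E (fun j => j = tgt) in
  (k = 0 /\
    ((t = 0 /\ r = 0 /\ y = 0) \/
     (t = 1 /\ r = 0 /\ y = S x') \/
     (t = 2 /\ r = 0 /\ y = p1 x') \/
     (t = 3 /\ r = 0 /\ y = p2 x') \/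
     (t = 4 /\ M (jE (p1 r) x' (p1 y)) /\ M (jE (p2 r) x' (p2 y))) \/
     (t = 5 /\ E (fun j => p1 j = 0 /\ p1 (p2 j) = p2 r /\
          p1 (p2 (p2 j)) = x' /\ M (jE (p1 r) (p2 (p2 (p2 j))) y))) \/
     (t = 6 /\ ((p2 x' = 0 /\ M (jE (p1 r) (p1 x') y) /\ M (cE (p2 r))) \/
                (~ p2 x' = 0 /\ E (fun j => p1 j = 0 /\ p1 (p2 j) = e' /\
                   p1 (p2 (p2 j)) = cpair (p1 x') (pred (p2 x')) /\
                   M (jE (p2 r) (cpair (p1 x') (cpair (pred (p2 x')) (p2 (p2 (p2 j))))) y))))) \/
     (t = 7 /\ M (jE r (cpair x' y) 0) /\
        forall m, m < y -> E (fun j => p1 j = 0 /\ p1 (p2 j) = r /\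
           p1 (p2 (p2 j)) = cpair x' m /\ ~ p2 (p2 (p2 j)) = 0))))
  \/
  (k = 1 /\
    (((t = 0 \/ t = 1 \/ t = 2 \/ t = 3) /\ r = 0) \/
     ((t = 4 \/ t = 5 \/ t = 6) /\ M (cE (p1 r)) /\ M (cE (p2 r))) \/
     (t = 7 /\ M (cE r)))).

Definition validP (f : nat -> nat) (p : nat) : Prop :=
  validE (f p) (fun P => exists q, q < p /\ P (f q)).

Definition Valid (S p : exp) : exp :=
 let J := Look S p in
 let k := Fs J in let e' := Fs (Sn J) in let x' := Fs (Sn (Sn J)) in let y := Sn (Sn (Sn J)) in
 let t := Fs e' in let r := Sn e' in
 let jE a b c := Pr (Cst 0) (Pr a (Pr b c)) in
 let cE a := Pr (Cst 1) (Pr a (Pr (Cst 0) (Cst 0))) in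
 let M tgt := Mem S p tgt in
 let eq a n := Eqn a (Cst n) in
 Or (And (eq k 0)
   (Or (And (eq t 0) (And (eq r 0) (eq y 0)))
   (Or (And (eq t 1) (And (eq r 0) (Eqn y (Suc x'))))
   (Or (And (eq t 2) (And (eq r 0) (Eqn y (Fs x'))))
   (Or (And (eq t 3) (And (eq r 0) (Eqn y (Sn x'))))
   (Or (And (eq t 4) (And (M (jE (Fs r) x' (Fs y))) (M (jE (Sn r) x' (Sn y)))))
   (Or (And (eq t 5) (Bex p (let L := Look (l1 S) (Var 0) in
          And (Eqn (Fs L) (Cst 0)) (And (Eqn (Fs (Sn L)) (l1 (Sn r))) (And (Eqn (Fs (Sn (Sn L))) (l1 x'))
             (Mem (l1 S) (l1 p) (jE (l1 (Fs r)) (Sn (Sn (Sn L))) (l1 y))))))))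
   (Or (And (eq t 6) (Or (And (eq (Sn x') 0) (And (M (jE (Fs r) (Fs x') y)) (M (cE (Sn r)))))
          (And (Not (eq (Sn x') 0)) (Bex p (let L := Look (l1 S) (Var 0) in
             And (Eqn (Fs L) (Cst 0)) (And (Eqn (Fs (Sn L)) (l1 e')) (And (Eqn (Fs (Sn (Sn L))) (l1 (Pr (Fs x') (Prd (Sn x')))))
               (Mem (l1 S) (l1 p) (jE (l1 (Sn r)) (Pr (l1 (Fs x')) (Pr (l1 (Prd (Sn x'))) (Sn (Sn (Sn L))))) (l1 y))))))))))
       (And (eq t 7) (And (M (jE r (Pr x' y) (Cst 0)))
          (Ball y (Bex (l1 p) (let L := Look (l1 (l1 S)) (Var 0) in
             And (Eqn (Fs L) (Cst 0)) (And (Eqn (Fs (Sn L)) (l1 (l1 r))) (And (Eqn (Fs (Sn (Sn L))) (Pr (l1 (l1 x')) (Var 1)))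
               (Not (eq (Sn (Sn (Sn L))) 0)))))))))))))))))
  (And (eq k 1)
   (Or (And (Or (eq t 0) (Or (eq t 1) (Or (eq t 2) (eq t 3)))) (eq r 0))
   (Or (And (Or (eq t 4) (Or (eq t 5) (eq t 6))) (And (M (cE (Fs r))) (M (cE (Sn r)))))
       (And (eq t 7) (M (cE r)))))).

Ltac trw := repeat first [ setoid_rewrite T_Or | setoid_rewrite T_And | setoid_rewrite T_Not
   | setoid_rewrite T_Eqn | setoid_rewrite T_Bex | setoid_rewrite T_Ball | setoid_rewrite T_Mem
   | setoid_rewrite ev_l1 | setoid_rewrite ev_Look ].

Lemma T_Valid env S p : T (Valid S p) env <-> validP (lookF (evalx S env)) (evalx p env).
Proof.
  unfold Valid, validP, validE. cbv zeta. trw. cbn [evalx]. trw. cbn [evalx nth].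
  reflexivity.
Qed.


Definition TCHK : exp :=
  And (Ball (Fs (Var 0)) (Valid (Sn (Var 1)) (Var 0)))
      (Bex (Fs (Var 0)) (let J := Look (Sn (Var 1)) (Var 0) in
         And (Eqn (Fs J) (Cst 0)) (And (Eqn (Fs (Sn J)) (Var 3)) (Eqn (Fs (Sn (Sn J))) (Var 2))))).

Definition chkP (f : nat -> nat) (len e x : nat) : Prop :=
  (forall p, p < len -> validP f p) /\
  exists p, p < len /\ p1 (f p) = 0 /\ p1 (p2 (f p)) = e /\ p1 (p2 (p2 (f p))) = x.

Lemma T_TCHK w x e rest : T TCHK (w :: x :: e :: rest) <-> chkP (lookF (p2 w)) (p1 w) e x.
Proof.
  unfold TCHK, chkP. rewrite T_And, T_Ball, T_Bex. setoid_rewrite T_Valid.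
  trw. cbn [evalx nth]. reflexivity.
Qed.

Lemma validE_mono J E1 E2 :
  (forall P Q : nat -> Prop, (forall j, P j -> Q j) -> E1 P -> E2 Q) -> validE J E1 -> validE J E2.
Proof.
  intros H. assert (H' : forall P, E1 P -> E2 P) by (intros P; apply H; auto).
  unfold validE. cbv zeta. intros [[k C]|[k C]]; [left|right]; split; auto.
  - destruct C as [c|[c|[c|[c|[c|[c|[c|c]]]]]]].
    + left; auto.
    + right; left; auto.
    + do 2 right; left; auto.
    + do 3 right; left; auto.
    + do 4 right; left; intuition auto.
    + do 5 right; left. destruct c as [c1 c2]. split; auto.
      eapply H; [|exact c2]. intros j Hj; cbv beta in *; intuition auto.
    + do 6 right; left. destruct c as [c1 [[c2 [c3 c4]]|[c2 c3]]].
      * split; auto.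
      * split; auto. right. split; auto. eapply H; [|exact c3]. intros j Hj; cbv beta in *; intuition auto.
    + do 7 right. destruct c as [c1 [c2 c3]]. split; [auto|]. split; [auto|].
      intros m Hm. eapply H; [|exact (c3 m Hm)]. auto.
  - intuition auto.
Qed.

Lemma e_decomp e : e = cpair (p1 e) (p2 e).
Proof. symmetry; apply cpair_unpair. Qed.

Lemma encode_inj c1 : forall c2, encode c1 = encode c2 -> c1 = c2.
Proof.
  induction c1; destruct c2; simpl; intro H; apply cpair_inj in H; destruct H as [H1 H2];
    try discriminate; auto;
    try (apply cpair_inj in H2; destruct H2; f_equal; auto).
  f_equal; auto.
Qed.

Lemma ev_p1 x : eval CProj1 x (p1 x).
Proof. rewrite (e_decomp x) at 1. constructor. Qed.
Lemma ev_p2 x : eval CProj2 x (p2 x).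
Proof. rewrite (e_decomp x) at 1. constructor. Qed.

Lemma decode6 c z : encode c = cpair 6 z -> exists f g, c = CPrim f g /\ z = cpair (encode f) (encode g).
Proof.
  destruct c; simpl; intro H; apply cpair_inj in H; destruct H as [H1 H2]; try discriminate.
  eauto.
Qed.

Lemma e_eq e t r : p1 e = t -> p2 e = r -> cpair t r = e.
Proof. intros <- <-. apply cpair_unpair. Qed.

Definition sem (f : nat -> nat) (p : nat) : Prop :=
  (p1 (f p) = 0 -> exists c, encode c = p1 (p2 (f p)) /\
      eval c (p1 (p2 (p2 (f p)))) (p2 (p2 (p2 (f p))))) /\
  (p1 (f p) = 1 -> exists c, encode c = p1 (p2 (f p))).

Lemma p_jE a b c : p1 (jE a b c) = 0 /\ p1 (p2 (jE a b c)) = a /\ p1 (p2 (p2 (jE a b c))) = b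
  /\ p2 (p2 (p2 (jE a b c))) = c.
Proof. unfold jE. rewrite !p2_cpair, !p1_cpair. auto. Qed.
Lemma p_cE a : p1 (cE a) = 1 /\ p1 (p2 (cE a)) = a.
Proof. unfold cE. rewrite !p2_cpair, !p1_cpair. auto. Qed.

Lemma sound f n : (forall p, p < n -> validP f p) -> forall p, p < n -> sem f p.
Proof.
  intros V p. induction p as [p IH] using (well_founded_induction lt_wf). intro Hp.
  assert (HQ : forall q, q < p -> p1 (f q) = 0 -> exists c, encode c = p1 (p2 (f q)) /\
      eval c (p1 (p2 (p2 (f q)))) (p2 (p2 (p2 (f q))))).
  { intros q Hq H0. apply (IH q Hq); auto; lia. }
  assert (HJ : forall a b c, (exists q, q < p /\ f q = jE a b c) ->
             exists cd, encode cd = a /\ eval cd b c).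
  { intros a b c [q [Hq E]]. destruct (HQ q Hq) as [cd [E1 E2]].
    - rewrite E. apply p_jE.
    - rewrite E in E1, E2. destruct (p_jE a b c) as [_ [X1 [X2 X3]]].
      rewrite X1 in E1. rewrite X2, X3 in E2. eauto. }
  assert (HC : forall a, (exists q, q < p /\ f q = cE a) -> exists cd, encode cd = a).
  { intros a [q [Hq E]]. destruct (IH q Hq) as [_ H1]; [lia|].
    destruct H1 as [cd Ecd]. rewrite E. apply p_cE. rewrite E in Ecd.
    rewrite (proj2 (p_cE a)) in Ecd. eauto. }
  pose proof (V p Hp) as Vp. unfold validP, validE in Vp. cbv zeta in Vp.
  remember (f p) as J eqn:EJ.
  remember (p1 (p2 J)) as e' eqn:Ee.
  remember (p1 (p2 (p2 J))) as x' eqn:Ex.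
  remember (p2 (p2 (p2 J))) as y eqn:Ey.
  assert (De : e' = cpair (p1 e') (p2 e')) by apply e_decomp.
  unfold sem. rewrite <- EJ, <- Ee, <- Ex, <- Ey.
  destruct Vp as [[Hk C]|[Hk C]].
  - split; [intros _|intro; lia].
    destruct C as [c|[c|[c|[c|[c|[c|[c|c]]]]]]].
    + destruct c as [Ht [Hr Hy]]. exists CZero. simpl. rewrite Hy. split; [apply e_eq; auto|]. constructor.
    + destruct c as [Ht [Hr Hy]]. exists CSucc. simpl. rewrite Hy. split; [apply e_eq; auto|]. constructor.
    + destruct c as [Ht [Hr Hy]]. exists CProj1. simpl. rewrite Hy. split; [apply e_eq; auto|]. apply ev_p1.
    + destruct c as [Ht [Hr Hy]]. exists CProj2. simpl. rewrite Hy. split; [apply e_eq; auto|]. apply ev_p2.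
    + destruct c as [Ht [M1 M2]]. destruct (HJ _ _ _ M1) as [cf [Ef Vf]].
      destruct (HJ _ _ _ M2) as [cg [Eg Vg]].
      exists (CPair cf cg). simpl. rewrite Ef, Eg, cpair_unpair. split; [apply e_eq; auto|].
      rewrite (e_decomp y). constructor; auto.
    + destruct c as [Ht [q [Hq [Q0 [Q1 [Q2 M]]]]]].
      destruct (HQ q Hq Q0) as [cg [Eg Vg]]. destruct (HJ _ _ _ M) as [cf [Ef Vf]].
      rewrite Q1 in Eg. rewrite Q2 in Vg.
      exists (CComp cf cg). simpl. rewrite Ef, Eg, cpair_unpair. split; [apply e_eq; auto|].
      econstructor; eauto.
    + destruct c as [Ht [[Hn [M1 M2]]|[Hn [q [Hq [Q0 [Q1 [Q2 M]]]]]]]].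
      * destruct (HJ _ _ _ M1) as [cf [Ef Vf]]. destruct (HC _ M2) as [cg Eg].
        exists (CPrim cf cg). simpl. rewrite Ef, Eg, cpair_unpair. split; [apply e_eq; auto|].
        rewrite (e_decomp x'), Hn. constructor; auto.
      * destruct (HQ q Hq Q0) as [c' [E' V']]. destruct (HJ _ _ _ M) as [cg [Eg Vg]].
        rewrite Q1 in E'. rewrite Q2 in V'.
        rewrite De, Ht in E'. destruct (decode6 _ _ E') as [f0 [g0 [Hc Hz]]].
        assert (g0 = cg). { apply encode_inj. rewrite Eg, Hz, p2_cpair. reflexivity. }
        subst g0 c'. exists (CPrim f0 cg). split.
        { simpl. rewrite <- Hz. apply e_eq; auto. }
        replace x' with (cpair (p1 x') (S (pred (p2 x')))).
        2:{ rewrite (e_decomp x') at 3. f_equal. lia. }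
        econstructor; eauto.
    + destruct c as [Ht [M0 Hall]]. destruct (HJ _ _ _ M0) as [cf [Ef Vf]].
      exists (CMu cf). simpl. rewrite Ef. split; [apply e_eq; auto|].
      constructor; auto. intros m Hm. destruct (Hall m Hm) as [q [Hq [Q0 [Q1 [Q2 Q3]]]]].
      destruct (HQ q Hq Q0) as [cm [Em Vm]]. rewrite Q1, <- Ef in Em. apply encode_inj in Em. subst cm.
      rewrite Q2 in Vm. destruct (p2 (p2 (p2 (f q)))) as [|k] eqn:Ek; [congruence|]. eauto.
  - split; [intro; lia| intros _].
    destruct C as [[Ht Hr]|[[Ht [M1 M2]]|[Ht M]]].
    + destruct Ht as [Ht|[Ht|[Ht|Ht]]];
        [exists CZero|exists CSucc|exists CProj1|exists CProj2]; simpl; apply e_eq; auto.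
    + destruct (HC _ M1) as [cf Ef]. destruct (HC _ M2) as [cg Eg].
      destruct Ht as [Ht|[Ht|Ht]];
        [exists (CPair cf cg)|exists (CComp cf cg)|exists (CPrim cf cg)]; simpl;
        rewrite Ef, Eg, cpair_unpair; apply e_eq; auto.
    + destruct (HC _ M) as [cf Ef]. exists (CMu cf). simpl. rewrite Ef. apply e_eq; auto.
Qed.

Definition good (l : list nat) : Prop :=
  forall p, p < length l -> validP (fun q => nth q l 0) p.

Lemma validP_shift f g p k : validP f p -> (forall q, q <= p -> f q = g (q + k)) ->
  validP g (p + k).
Proof.
  unfold validP. intros V H. rewrite (H p (le_n p)) in V.
  eapply validE_mono; [|exact V].
  intros P Q PQ [q [Hq HP]]. exists (q + k). split; [lia|]. apply PQ.
  rewrite <- H; auto. lia.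
Qed.

Lemma good_app l1 l2 : good l1 -> good l2 -> good (l1 ++ l2).
Proof.
  intros G1 G2 p Hp. rewrite length_app in Hp.
  destruct (lt_dec p (length l1)).
  - replace p with (p + 0) by lia. apply validP_shift with (f := fun q => nth q l1 0).
    + apply G1; auto.
    + intros q Hq. rewrite app_nth1 by lia. f_equal; lia.
  - replace p with ((p - length l1) + length l1) by lia.
    apply validP_shift with (f := fun q => nth q l2 0).
    + apply G2; lia.
    + intros q Hq. rewrite app_nth2 by lia. f_equal; lia.
Qed.

Definition Ex (l : list nat) (P : nat -> Prop) := exists q, q < length l /\ P (nth q l 0).

Lemma good_snoc l a : good l -> validE a (Ex l) -> good (l ++ [a]).
Proof.
  intros G V p Hp. rewrite length_app in Hp. simpl in Hp.
  destruct (lt_dec p (length l)).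
  - replace p with (p + 0) by lia. apply validP_shift with (f := fun q => nth q l 0).
    + apply G; auto.
    + intros q Hq. rewrite app_nth1 by lia. f_equal; lia.
  - assert (p = length l) by lia. subst p. unfold validP.
    rewrite nth_middle. eapply validE_mono; [|exact V].
    intros P Q PQ [q [Hq HP]]. exists q. split; auto. rewrite app_nth1 by lia. auto.
Qed.

Lemma Ex_in l t (P : nat -> Prop) : In t l -> P t -> Ex l P.
Proof.
  intros I Pt. destruct (In_nth l t 0 I) as [q [Hq E]]. exists q. rewrite E. auto.
Qed.

Lemma Ex_app_l l1 l2 P : Ex l1 P -> Ex (l1 ++ l2) P.
Proof.
  intros [q [Hq Pq]]. exists q. rewrite length_app, app_nth1 by lia. split; auto; lia.
Qed.

Lemma good_nil : good [].
Proof. intros p Hp. simpl in Hp. lia. Qed.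

Ltac pj := unfold jE, cE in *; repeat progress (rewrite ?p1_cpair, ?p2_cpair in *).

Lemma cert_complete c : exists l, good l /\ In (cE (encode c)) l.
Proof.
  induction c.
  1-4: match goal with |- exists l, _ /\ In (cE (encode ?c)) l =>
      exists ([] ++ [cE (encode c)]) end; split; [|left; reflexivity];
    apply good_snoc; [apply good_nil|];
    unfold validE; cbv zeta; simpl encode; pj; right; split; auto; left; split; auto; tauto.
  1-3: destruct IHc1 as [l1 [G1 I1]]; destruct IHc2 as [l2 [G2 I2]];
    match goal with |- exists l, _ /\ In (cE (encode ?c)) l =>
      exists ((l1 ++ l2) ++ [cE (encode c)]) end; split; [|apply in_or_app; right; left; reflexivity];
    apply good_snoc; [apply good_app; auto|];
    unfold validE; cbv zeta; simpl encode; pj; right; split; auto; right; left;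
    split; [tauto|]; split;
    [apply Ex_in with (t := cE (encode c1)); [apply in_or_app; left; auto|pj; auto]
    |apply Ex_in with (t := cE (encode c2)); [apply in_or_app; right; auto|pj; auto]].
  destruct IHc as [l1 [G1 I1]].
  exists (l1 ++ [cE (encode (CMu c))]); split; [|apply in_or_app; right; left; reflexivity].
  apply good_snoc; auto. unfold validE; cbv zeta; simpl encode; pj. right; split; auto.
  right; right. split; auto. apply Ex_in with (t := cE (encode c)); auto; pj; auto.
Qed.

Lemma combine (g : nat -> nat -> nat) n :
  (forall m, m < n -> exists l, good l /\ exists k, In (g m k) l) ->
  exists L, good L /\ forall m, m < n -> exists k, In (g m k) L.
Proof.
  induction n; intro H.
  - exists []. split; [apply good_nil|]. intros; lia.
  - destruct IHn as [L [GL HL]]. { intros m Hm. apply H. lia. }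
    destruct (H n (le_n _)) as [l [Gl [k Hk]]].
    exists (L ++ l). split; [apply good_app; auto|].
    intros m Hm. destruct (Nat.eq_dec m n).
    + subst. exists k. apply in_or_app; auto.
    + destruct (HL m) as [k' Hk']; [lia|]. exists k'. apply in_or_app; auto.
Qed.

Lemma In_app3 (a : nat) l1 l2 : In a l1 -> In a (l1 ++ l2).
Proof. intros; apply in_or_app; auto. Qed.
Lemma In_app3r (a : nat) l1 l2 : In a l2 -> In a (l1 ++ l2).
Proof. intros; apply in_or_app; auto. Qed.

Lemma eval_complete : forall c x y, eval c x y -> exists l, good l /\ In (jE (encode c) x y) l.
Proof.
  fix IH 4. intros c x y H.
  destruct H as [| | | |f g x a b H1 H2|f g x a y H1 H2|f g x y H1|f g x n r y H1 H2|f x n H1 H2].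
  1-4: match goal with |- exists l, _ /\ In ?t l => exists ([] ++ [t]) end;
    split; [|left; reflexivity];
    apply good_snoc; [apply good_nil|];
    unfold validE; cbv zeta; simpl encode; pj; left; split; auto;
    first [solve [left; auto] | solve [right; left; auto] | solve [do 2 right; left; auto]
          | solve [do 3 right; left; auto]].
  - destruct (IH _ _ _ H1) as [l1 [G1 I1]]. destruct (IH _ _ _ H2) as [l2 [G2 I2]].
    match goal with |- exists l, _ /\ In ?t l => exists ((l1 ++ l2) ++ [t]) end.
    split; [|apply In_app3r; left; reflexivity].
    apply good_snoc; [apply good_app; auto|].
    unfold validE; cbv zeta; simpl encode; pj; left; split; auto.
    do 4 right; left. split; auto. split.
    + apply Ex_in with (t := jE (encode f) x a); [apply In_app3; auto|]. pj; auto.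
    + apply Ex_in with (t := jE (encode g) x b); [apply In_app3r; auto|]. pj; auto.
  - destruct (IH _ _ _ H1) as [l1 [G1 I1]]. destruct (IH _ _ _ H2) as [l2 [G2 I2]].
    match goal with |- exists l, _ /\ In ?t l => exists ((l1 ++ l2) ++ [t]) end.
    split; [|apply In_app3r; left; reflexivity].
    apply good_snoc; [apply good_app; auto|].
    unfold validE; cbv zeta; simpl encode; pj; left; split; auto.
    do 5 right; left. split; auto.
    apply Ex_in with (t := jE (encode g) x a); [apply In_app3; auto|]. pj.
    split; auto. split; auto. split; auto.
    apply Ex_in with (t := jE (encode f) a y); [apply In_app3r; auto|]. pj; auto.
  - destruct (IH _ _ _ H1) as [l1 [G1 I1]]. destruct (cert_complete g) as [l2 [G2 I2]].
    match goal with |- exists l, _ /\ In ?t l => exists ((l1 ++ l2) ++ [t]) end.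
    split; [|apply In_app3r; left; reflexivity].
    apply good_snoc; [apply good_app; auto|].
    unfold validE; cbv zeta; simpl encode; pj; left; split; auto.
    do 6 right; left. split; auto. left. split; auto. split.
    + apply Ex_in with (t := jE (encode f) x y); [apply In_app3; auto|]. pj; auto.
    + apply Ex_in with (t := cE (encode g)); [apply In_app3r; auto|]. pj; auto.
  - destruct (IH _ _ _ H1) as [l1 [G1 I1]]. destruct (IH _ _ _ H2) as [l2 [G2 I2]].
    match goal with |- exists l, _ /\ In ?t l => exists ((l1 ++ l2) ++ [t]) end.
    split; [|apply In_app3r; left; reflexivity].
    apply good_snoc; [apply good_app; auto|].
    unfold validE; cbv zeta; simpl encode; pj; left; split; auto.
    do 6 right; left. split; auto. right. split; [lia|].
    apply Ex_in with (t := jE (encode (CPrim f g)) (cpair x n) r); [apply In_app3; auto|].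
    simpl encode. pj. simpl pred. split; auto. split; auto. split; auto.
    apply Ex_in with (t := jE (encode g) (cpair x (cpair n r)) y); [apply In_app3r; auto|]. pj; auto.
  - destruct (IH _ _ _ H1) as [l1 [G1 I1]].
    destruct (combine (fun m k => jE (encode f) (cpair x m) (S k)) n) as [L [GL HL]].
    { intros m Hm. destruct (H2 m Hm) as [k Hk]. destruct (IH _ _ _ Hk) as [l [Gl Il]].
      exists l. split; auto. exists k. auto. }
    match goal with |- exists l, _ /\ In ?t l => exists ((l1 ++ L) ++ [t]) end.
    split; [|apply In_app3r; left; reflexivity].
    apply good_snoc; [apply good_app; auto|].
    unfold validE; cbv zeta; simpl encode; pj; left; split; auto.
    do 7 right. split; auto. split.
    + apply Ex_in with (t := jE (encode f) (cpair x n) 0); [apply In_app3; auto|]. pj; auto.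
    + intros m Hm. destruct (HL m Hm) as [k Hk].
      apply Ex_in with (t := jE (encode f) (cpair x m) (S k)); [apply In_app3r; auto|]. pj.
      repeat split; auto.
Qed.

Lemma lookF_encenv l q : lookF (encenv l) q = nth q l 0.
Proof.
  revert q; induction l; intro q.
  - unfold lookF. simpl.
    assert (iterF q 0 (fun _ r => p2 r) = 0) as ->; [|destruct q; reflexivity].
    induction q; auto. cbn [iterF]. rewrite IHq. reflexivity.
  - destruct q.
    + unfold lookF; simpl. apply p1_cpair.
    + unfold lookF. rewrite iterF_shift. cbn [encenv]. rewrite p2_cpair. apply IHl.
Qed.

Lemma W_iff_chk e x : W e x <-> exists w, chkP (lookF (p2 w)) (p1 w) e x.
Proof.
  split.
  - intros [y [c [Ec Hc]]]. destruct (eval_complete _ _ _ Hc) as [l [G I]].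
    exists (cpair (length l) (encenv l)). rewrite p1_cpair, p2_cpair.
    replace (lookF (encenv l)) with (fun q => nth q l 0)
      by (apply functional_extensionality; intro; symmetry; apply lookF_encenv).
    split; auto.
    destruct (In_nth l _ 0 I) as [p [Hp Ep]]. exists p. rewrite Ep, <- Ec. split; auto. destruct (p_jE (encode c) x y) as [X1 [X2 [X3 _]]]. auto.
  - intros [w [V [p [Hp [H0 [He Hx]]]]]].
    destruct (sound _ _ V p Hp) as [S0 _]. destruct (S0 H0) as [c [Ec Hc]].
    exists (p2 (p2 (p2 (lookF (p2 w) p)))). exists c. rewrite <- He, <- Hx. auto.
Qed.

Lemma W_TCHK e x rest : W e x <-> exists w, T TCHK (w :: x :: e :: rest).
Proof. rewrite W_iff_chk. setoid_rewrite T_TCHK. reflexivity. Qed.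

Definition UT (eE xE wE : exp) : exp := Let eE (Let (l1 xE) (Let (l1 (l1 wE)) TCHK)).

Lemma T_UT env eE xE wE :
  T (UT eE xE wE) env <-> T TCHK (evalx wE env :: evalx xE env :: evalx eE env :: env).
Proof. unfold UT, T. cbn [evalx]. rewrite !ev_l1. reflexivity. Qed.

Lemma least_wit (P : nat -> Prop) (dec : forall n, P n \/ ~ P n) :
  forall n, P n -> exists m, P m /\ forall k, k < m -> ~ P k.
Proof.
  intro n. induction n as [n IH] using (well_founded_induction lt_wf). intros Pn.
  assert (Hd : (exists k, k < n /\ P k) \/ (forall k, k < n -> ~ P k)).
  { clear IH Pn. induction n.
    - right. intros; lia.
    - destruct IHn as [[k [Hk Pk]]|H].
      + left. exists k. split; auto; lia.
      + destruct (dec n) as [Pn|Pn].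
        * left. exists n. split; auto.
        * right. intros k Hk. destruct (Nat.eq_dec k n); [subst; auto|apply H; lia]. }
  destruct Hd as [[k [Hk Pk]]|H].
  - apply (IH k Hk Pk).
  - exists n. split; auto.
Qed.

Definition Srch (E : exp) : code := CMu (CComp (compile E) (CPair CProj2 (CPair CProj1 CZero))).

Lemma Srch_dom E x : (exists y, eval (Srch E) x y) <-> exists w, evalx E [w; x] = 0.
Proof.
  assert (Hm : mufree (CComp (compile E) (CPair CProj2 (CPair CProj1 CZero)))).
  { simpl. pose proof (mufree_compile E). tauto. }
  assert (Hd : forall w, den (CComp (compile E) (CPair CProj2 (CPair CProj1 CZero))) (cpair x w)
                        = evalx E [w; x]).
  { intro w. simpl. rewrite p1_cpair, p2_cpair. rewrite <- compile_correct. reflexivity. }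
  split.
  - intros [y Hy]. inversion Hy; subst. exists y. match goal with H : eval _ (cpair x y) 0 |- _ => apply eval_det in H; auto; rewrite Hd in H; auto end.
  - intros [w Hw]. destruct (least_wit (fun w => evalx E [w; x] = 0)
        (fun n => ltac:(destruct (Nat.eq_dec (evalx E [n; x]) 0); auto)) w Hw) as [m [Pm Hm']].
    exists m. constructor.
    + rewrite eval_mufree by auto. rewrite Hd. auto.
    + intros k Hk. specialize (Hm' k Hk). cbv beta in Hm'. rewrite <- Hd in Hm'.
      destruct (den _ (cpair x k)) as [|kk] eqn:Ek; [contradiction|].
      exists kk. rewrite <- Ek. apply eval_den; auto.
Qed.

Lemma W_encode c x : W (encode c) x <-> exists y, eval c x y.
Proof.
  unfold W, phi. split.
  - intros [y [c' [E H]]]. apply encode_inj in E. subst. eauto.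
  - intros [y H]. eauto.
Qed.

Lemma W_Srch E x : W (encode (Srch E)) x <-> exists w, evalx E [w; x] = 0.
Proof. rewrite W_encode. apply Srch_dom. Qed.

Lemma Not0 env a : evalx (Not a) env = 0 <-> T a env.
Proof. unfold T. rewrite ev_Not. unfold nz. destruct (evalx a env); simpl; split; intro; try congruence; lia. Qed.
Global Opaque TCHK.

Lemma eset_ext (A B : eset) : (forall x, A x <-> B x) -> A = B.
Proof. intro H. apply functional_extensionality. intro x. apply propositional_extensionality. auto. Qed.

Definition join (A S : eset) : eset := fun x => if Nat.even x then A (Nat.div2 x) else S (Nat.div2 x).
Definition sing (c : nat) : eset := fun y => y = c.

Lemma bit_single k t : Nat.testbit (2 ^ k) t = true <-> t = k.
Proof. rewrite Nat.pow2_bits_eqb, Nat.eqb_eq. split; auto. Qed.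

Lemma testbit_lt u t : Nat.testbit u t = true -> t < u.
Proof.
  intro H. destruct (lt_dec t u); auto. exfalso.
  destruct u. { rewrite Nat.bits_0 in H. discriminate. }
  rewrite Nat.bits_above_log2 in H; [discriminate|].
  pose proof (Nat.log2_lt_lin (S u)). lia.
Qed.

Lemma canon_exists (P : nat -> bool) N : exists d, forall t, Nat.testbit d t = (t <? N) && P t.
Proof.
  induction N.
  - exists 0. intro t. rewrite Nat.bits_0. reflexivity.
  - destruct IHN as [d Hd]. destruct (P N) eqn:PN.
    + exists (Nat.setbit d N). intro t. rewrite Nat.setbit_eqb, Hd.
      destruct (Nat.eqb_spec N t); destruct (Nat.ltb_spec t N); destruct (Nat.ltb_spec t (S N));
        subst; simpl; rewrite ?PN; auto; try lia.
    + exists d. intro t. rewrite Hd.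
      destruct (Nat.eq_dec N t); destruct (Nat.ltb_spec t N); destruct (Nat.ltb_spec t (S N));
        subst; simpl; rewrite ?PN; auto; try lia.
Qed.

Lemma Gamma_Srch E Z n : Gamma (encode (Srch E)) Z n <->
  exists u, (exists w, evalx E [w; cpair n u] = 0) /\ (forall k, Nat.testbit u k = true -> Z k).
Proof. unfold Gamma, canon. setoid_rewrite W_Srch. reflexivity. Qed.

Lemma div2_even x : Nat.odd x = false -> x = 2 * Nat.div2 x.
Proof. intro H. pose proof (Nat.div2_odd x). rewrite H in H0. simpl in H0. lia. Qed.
Lemma div2_odd' x : Nat.odd x = true -> x = 2 * Nat.div2 x + 1.
Proof. intro H. pose proof (Nat.div2_odd x). rewrite H in H0. simpl in H0. lia. Qed.

Lemma even_odd x : Nat.even x = negb (Nat.odd x).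
Proof. rewrite <- Nat.negb_odd. reflexivity. Qed.

Lemma div2_2x k : Nat.div2 (2 * k) = k.
Proof. apply Nat.div2_double. Qed.
Lemma div2_2x1 k : Nat.div2 (2 * k + 1) = k.
Proof. replace (2 * k + 1) with (S (2 * k)) by lia. apply Nat.div2_succ_double. Qed.
Lemma odd_2x k : Nat.odd (2 * k) = false.
Proof. rewrite <- Nat.negb_even, Nat.even_mul. reflexivity. Qed.
Lemma odd_2x1 k : Nat.odd (2 * k + 1) = true.
Proof. rewrite Nat.add_comm, Nat.odd_add_mul_2. reflexivity. Qed.

Lemma b2n_odd0 x : Nat.b2n (Nat.odd x) = 0 <-> Nat.odd x = false.
Proof. destruct (Nat.odd x); simpl; split; congruence. Qed.
Lemma b2n_odd1 x : Nat.b2n (Nat.odd x) = 1 <-> Nat.odd x = true.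
Proof. destruct (Nat.odd x); simpl; split; congruence. Qed.

Lemma T_Tb env d k : T (Tb d k) env <-> Nat.testbit (evalx d env) (evalx k env) = true.
Proof. unfold T. rewrite ev_Tb. destruct (Nat.testbit _ _); simpl; split; congruence. Qed.
Lemma T_Imp env a b : T (Imp a b) env <-> (T a env -> T b env).
Proof. unfold T. rewrite ev_Imp. unfold nz. destruct (evalx a env), (evalx b env); simpl;
  split; intros; try congruence; try lia; exfalso; apply H; lia. Qed.

Definition Vn := Fs (Var 1).
Definition VD := Sn (Var 1).

Definition Ez := Not (Or (And (Eqn (Odd Vn) (Cst 0)) (Tb VD (Div2 Vn))) (Eqn Vn (Cst 1))).

Lemma Ez_spec w n u : evalx Ez [w; cpair n u] = 0 <->
  (Nat.odd n = false /\ Nat.testbit u (Nat.div2 n) = true) \/ n = 1.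
Proof.
  unfold Ez. rewrite Not0, T_Or, T_And, !T_Eqn, T_Tb. unfold Vn, VD. cbn [evalx nth].
  rewrite ev_Odd, ev_Div2. cbn [evalx nth]. rewrite p1_cpair, p2_cpair, b2n_odd0. reflexivity.
Qed.

Lemma Gz A : Gamma (encode (Srch Ez)) A = join A (sing 0).
Proof.
  apply eset_ext. intro x. rewrite Gamma_Srch. setoid_rewrite Ez_spec. unfold join, sing.
  rewrite even_odd. split.
  - intros [u [[w [[Ho Hb]|H1]] Hu]].
    + rewrite Ho. simpl. auto.
    + subst. reflexivity.
  - destruct (Nat.odd x) eqn:Ho; simpl; intro H.
    + exists 0. split; [exists 0; right|intros k Hk; rewrite Nat.bits_0 in Hk; discriminate].
      rewrite (div2_odd' x Ho), H. reflexivity.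
    + exists (2 ^ Nat.div2 x). split.
      * exists 0. left. split; auto. apply bit_single. auto.
      * intros k Hk. apply bit_single in Hk. subst. auto.
Qed.

Definition Epi := Not (Tb VD (Dbl Vn)).

Lemma Gpi A S : Gamma (encode (Srch Epi)) (join A S) = A.
Proof.
  apply eset_ext. intro x. rewrite Gamma_Srch. unfold Epi.
  setoid_rewrite Not0. setoid_rewrite T_Tb. unfold Vn, VD. cbn [evalx nth].
  setoid_rewrite ev_Dbl. cbn [evalx nth]. setoid_rewrite p1_cpair. setoid_rewrite p2_cpair.
  split.
  - intros [u [[w Hb] Hu]]. apply Hu in Hb. unfold join in Hb.
    rewrite even_odd, odd_2x, div2_2x in Hb. exact Hb.
  - intro H. exists (2 ^ (2 * x)). split.
    + exists 0. apply bit_single. auto.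
    + intros k Hk. apply bit_single in Hk. subst. unfold join.
      rewrite even_odd, odd_2x, div2_2x. exact H.
Qed.

Definition Es := Not (Or (And (Eqn (Odd Vn) (Cst 0)) (Tb VD Vn))
   (And (Eqn (Odd Vn) (Cst 1)) (And (Not (Eqn (Div2 Vn) (Cst 0))) (Tb VD (Sub Vn (Cst 2)))))).

Lemma Es_spec w n u : evalx Es [w; cpair n u] = 0 <->
  (Nat.odd n = false /\ Nat.testbit u n = true) \/
  (Nat.odd n = true /\ ~ Nat.div2 n = 0 /\ Nat.testbit u (n - 2) = true).
Proof.
  unfold Es. rewrite Not0, T_Or, !T_And, T_Not, !T_Eqn, !T_Tb. unfold Vn, VD. cbn [evalx nth].
  rewrite ev_Odd, ev_Div2, ev_Sub. cbn [evalx nth]. rewrite p1_cpair, p2_cpair, b2n_odd0, b2n_odd1.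
  reflexivity.
Qed.

Ltac split_parity x :=
  let d := fresh "d" in let Ho := fresh "Ho" in
  destruct (Nat.odd x) eqn:Ho;
  [ pose proof (div2_odd' x Ho) | pose proof (div2_even x Ho) ];
  remember (Nat.div2 x) as d; subst x.

Lemma Gs A k : Gamma (encode (Srch Es)) (join A (sing k)) = join A (sing (S k)).
Proof.
  apply eset_ext. intro x. rewrite Gamma_Srch. setoid_rewrite Es_spec. unfold join, sing.
  rewrite even_odd. split_parity x; cbn [negb].
  - rewrite ?div2_2x1 in *. split.
    + intros [u [[w [[H1 _]|[_ [H2 H3]]]] Hu]]; [congruence|].
      rewrite ?div2_2x1 in H2. apply Hu in H3.
      replace (2 * d + 1 - 2) with (2 * (d - 1) + 1) in H3 by lia.
      rewrite even_odd, odd_2x1, div2_2x1 in H3. simpl in H3. lia.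
    + intro H. exists (2 ^ (2 * d + 1 - 2)). split.
      * exists 0. right. rewrite ?div2_2x1. repeat split; auto; [lia|]. apply bit_single. auto.
      * intros t Ht. apply bit_single in Ht. subst t.
        replace (2 * d + 1 - 2) with (2 * (d - 1) + 1) by lia.
        rewrite even_odd, odd_2x1, div2_2x1. simpl. lia.
  - rewrite ?div2_2x in *. split.
    + intros [u [[w [[_ H1]|[H2 _]]] Hu]]; [|congruence].
      apply Hu in H1. rewrite even_odd, odd_2x, div2_2x in H1. exact H1.
    + intro H. exists (2 ^ (2 * d)). split.
      * exists 0. left. split; auto. apply bit_single. auto.
      * intros t Ht. apply bit_single in Ht. subst t. rewrite even_odd, odd_2x, div2_2x. exact H.
Qed.

Definition Es' := Not (Or (And (Eqn (Odd Vn) (Cst 0)) (Tb VD Vn))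
   (And (Eqn (Odd Vn) (Cst 1)) (Tb VD (Add Vn (Cst 2))))).

Lemma Es'_spec w n u : evalx Es' [w; cpair n u] = 0 <->
  (Nat.odd n = false /\ Nat.testbit u n = true) \/
  (Nat.odd n = true /\ Nat.testbit u (n + 2) = true).
Proof.
  unfold Es'. rewrite Not0, T_Or, !T_And, !T_Eqn, !T_Tb. unfold Vn, VD. cbn [evalx nth].
  rewrite ev_Odd, ev_Add. cbn [evalx nth]. rewrite p1_cpair, p2_cpair, b2n_odd0, b2n_odd1.
  reflexivity.
Qed.

Lemma Gs' A k : Gamma (encode (Srch Es')) (join A (sing (S k))) = join A (sing k).
Proof.
  apply eset_ext. intro x. rewrite Gamma_Srch. setoid_rewrite Es'_spec. unfold join, sing.
  rewrite even_odd. split_parity x; cbn [negb].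
  - rewrite ?div2_2x1 in *. split.
    + intros [u [[w [[H1 _]|[_ H3]]] Hu]]; [congruence|].
      apply Hu in H3.
      replace (2 * d + 1 + 2) with (2 * (S d) + 1) in H3 by lia.
      rewrite even_odd, odd_2x1, div2_2x1 in H3. simpl in H3. lia.
    + intro H. exists (2 ^ (2 * d + 1 + 2)). split.
      * exists 0. right. split; auto. apply bit_single. auto.
      * intros t Ht. apply bit_single in Ht. subst t.
        replace (2 * d + 1 + 2) with (2 * (S d) + 1) by lia.
        rewrite even_odd, odd_2x1, div2_2x1. simpl. lia.
  - rewrite ?div2_2x in *. split.
    + intros [u [[w [[_ H1]|[H2 _]]] Hu]]; [|congruence].
      apply Hu in H1. rewrite even_odd, odd_2x, div2_2x in H1. exact H1.
    + intro H. exists (2 ^ (2 * d)). split.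
      * exists 0. left. split; auto. apply bit_single. auto.
      * intros t Ht. apply bit_single in Ht. subst t. rewrite even_odd, odd_2x, div2_2x. exact H.
Qed.

Definition Ep (sel : exp -> exp) := Not (Or
  (And (Eqn (Odd Vn) (Cst 0))
     (And (Tb VD (Suc (Dbl (Fs (Var 0)))))
       (And (Ball (Fs (Sn (Var 0))) (Imp (Tb (l1 (Fs (Sn (Var 0)))) (Var 0)) (Tb (l1 VD) (Dbl (Var 0)))))
            (UT (sel (Fs (Var 0))) (Pr (Div2 Vn) (Fs (Sn (Var 0)))) (Sn (Sn (Var 0)))))))
  (And (Eqn (Odd Vn) (Cst 1)) (Tb VD Vn))).

Section Sel.
Variable sel : exp -> exp.
Variable selF : nat -> nat.
Hypothesis Hsel : forall e env, evalx (sel e) env = selF (evalx e env).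

Lemma Ep_spec w n u : evalx (Ep sel) [w; cpair n u] = 0 <->
  (Nat.odd n = false /\ Nat.testbit u (S (2 * p1 w)) = true /\
     (forall t, t < p1 (p2 w) -> Nat.testbit (p1 (p2 w)) t = true -> Nat.testbit u (2 * t) = true) /\
     T TCHK [p2 (p2 w); cpair (Nat.div2 n) (p1 (p2 w)); selF (p1 w); w; cpair n u]) \/
  (Nat.odd n = true /\ Nat.testbit u n = true).
Proof.
  unfold Ep. rewrite Not0, T_Or, !T_And, !T_Eqn, T_Ball, !T_Tb, T_UT.
  setoid_rewrite T_Imp. setoid_rewrite T_Tb. setoid_rewrite ev_l1.
  unfold Vn, VD. cbn [evalx nth]. repeat (setoid_rewrite ev_Dbl).
  rewrite ?ev_Odd, ?ev_Div2, ?Hsel. cbn [evalx nth]. rewrite ?p1_cpair, ?p2_cpair, ?b2n_odd0, ?b2n_odd1.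
  reflexivity.
Qed.

Lemma Gp A c : Gamma (encode (Srch (Ep sel))) (join A (sing c)) = join (Gamma (selF c) A) (sing c).
Proof.
  apply eset_ext. intro x. rewrite Gamma_Srch. setoid_rewrite Ep_spec. unfold join at 2, sing.
  rewrite even_odd. split_parity x; cbn [negb].
  - rewrite ?div2_2x1 in *. split.
    + intros [u [[w [[H1 _]|[_ H3]]] Hu]]; [congruence|].
      apply Hu in H3. unfold join in H3. rewrite even_odd, odd_2x1, div2_2x1 in H3. exact H3.
    + intro H. exists (2 ^ (2 * d + 1)). split.
      * exists 0. right. split; auto. apply bit_single. auto.
      * intros t Ht. apply bit_single in Ht. subst t. unfold join, sing.
        rewrite even_odd, odd_2x1, div2_2x1. auto.
  - rewrite ?div2_2x in *. split.
    + intros [u [[w [[_ [H1 [H2 H3]]]|[H4 _]]] Hu]]; [|congruence].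
      apply Hu in H1. unfold join, sing in H1.
      replace (S (2 * p1 w)) with (2 * p1 w + 1) in H1 by lia.
      rewrite even_odd, odd_2x1, div2_2x1 in H1. simpl in H1. rewrite H1 in H3.
      exists (p1 (p2 w)). split.
      * apply W_iff_chk. exists (p2 (p2 w)). rewrite T_TCHK in H3. exact H3.
      * intros t Ht. unfold canon in Ht. pose proof (testbit_lt _ _ Ht).
        specialize (H2 t H Ht). apply Hu in H2. unfold join in H2.
        rewrite even_odd, odd_2x, div2_2x in H2. exact H2.
    + intros [uu [HW Hsub]]. apply W_iff_chk in HW. destruct HW as [wt Hwt].
      destruct (canon_exists (fun t => negb (Nat.odd t) && Nat.testbit uu (Nat.div2 t)) (2 * uu + 2))
        as [db Hdb].
      exists (Nat.lor (2 ^ (2 * c + 1)) db). split.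
      * exists (cpair c (cpair uu wt)). left. rewrite !p1_cpair, !p2_cpair. split; auto. split; [|split].
        -- rewrite Nat.lor_spec. replace (S (2 * c)) with (2 * c + 1) by lia.
           rewrite (proj2 (bit_single _ _) eq_refl). auto.
        -- intros t Ht Hb. rewrite ?p1_cpair, ?p2_cpair in *. rewrite Nat.lor_spec, Hdb, odd_2x, div2_2x, Hb.
           rewrite (proj2 (Nat.ltb_lt (2*t) (2*uu+2))) by lia. cbn [negb andb]. apply orb_true_r.
        -- rewrite T_TCHK, ?p1_cpair, ?p2_cpair. exact Hwt.
      * intros t Ht. rewrite Nat.lor_spec in Ht. apply orb_true_iff in Ht. unfold join, sing.
        destruct Ht as [Ht|Ht].
        -- apply bit_single in Ht. subst t. rewrite even_odd, odd_2x1, div2_2x1. reflexivity.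
        -- rewrite Hdb in Ht. apply andb_true_iff in Ht. destruct Ht as [_ Ht].
           apply andb_true_iff in Ht. destruct Ht as [Ht1 Ht2].
           rewrite even_odd. destruct (Nat.odd t); [discriminate|]. simpl. apply Hsub. exact Ht2.
Qed.
End Sel.

Definition KcE : exp :=
  let Ea := Fs (Fs (Var 1)) in let Eb := Sn (Fs (Var 1)) in
  let En := Fs (Sn (Var 1)) in let ED := Sn (Sn (Var 1)) in
  let D2 := Fs (Var 0) in let wb := Fs (Sn (Var 0)) in let L := Sn (Sn (Var 0)) in
  Not (And (UT Eb (Pr En D2) wb)
    (Ball D2 (Imp (Tb (l1 D2) (Var 0))
      (And (Ball (Fs (Look (l1 L) (Var 0)))
                 (Imp (Tb (Fs (Look (l1 (l1 L)) (Var 1))) (Var 0)) (Tb (l1 (l1 ED)) (Var 0))))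
           (UT (l1 Ea) (Pr (Var 0) (Fs (Look (l1 L) (Var 0)))) (Sn (Look (l1 L) (Var 0)))))))).

Lemma KcE_spec w a b n D :
  evalx KcE [w; cpair (cpair a b) (cpair n D)] = 0 <->
  T TCHK [p1 (p2 w); cpair n (p1 w); b; w; cpair (cpair a b) (cpair n D)] /\
  forall k, k < p1 w -> Nat.testbit (p1 w) k = true ->
    (forall t, t < p1 (lookF (p2 (p2 w)) k) -> Nat.testbit (p1 (lookF (p2 (p2 w)) k)) t = true ->
       Nat.testbit D t = true) /\
    T TCHK [p2 (lookF (p2 (p2 w)) k); cpair k (p1 (lookF (p2 (p2 w)) k)); a; k; w;
            cpair (cpair a b) (cpair n D)].
Proof.
  unfold KcE. cbv zeta. rewrite Not0, T_And, T_Ball, T_UT.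
  setoid_rewrite T_Imp. setoid_rewrite T_And. setoid_rewrite T_Ball. setoid_rewrite T_Imp.
  setoid_rewrite T_Tb. setoid_rewrite T_UT. repeat setoid_rewrite ev_l1. repeat setoid_rewrite ev_Look.
  cbn [evalx nth]. rewrite ?p1_cpair, ?p2_cpair. repeat setoid_rewrite ev_l1.
  repeat setoid_rewrite ev_Look. cbn [evalx nth]. repeat setoid_rewrite p1_cpair.
  repeat setoid_rewrite p2_cpair. setoid_rewrite (ev_l1 (l1 (Sn (Sn (Var 0))))). setoid_rewrite (ev_l1 (Sn (Sn (Var 0)))). cbn [evalx nth]. reflexivity.
Qed.

Definition Kc := Srch KcE.
Definition compI (a b : nat) : nat := encode (CComp Kc (CPair (CPair (constc a) (constc b)) CId)).

Lemma W_compI a b x : W (compI a b) x <-> exists w, evalx KcE [w; cpair (cpair a b) x] = 0.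
Proof.
  unfold compI. rewrite W_encode. rewrite <- Srch_dom. fold Kc.
  pose proof mufree_aux as [HI _].
  assert (Hm : mufree (CPair (CPair (constc a) (constc b)) CId)).
  { simpl. pose proof (mufree_constc a). pose proof (mufree_constc b). tauto. }
  assert (Hd : den (CPair (CPair (constc a) (constc b)) CId) x = cpair (cpair a b) x).
  { simpl. rewrite !den_constc, den_CId. reflexivity. }
  split.
  - intros [y Hy]. inversion Hy; subst. exists y.
    match goal with H : eval (CPair _ _) x ?a0 |- _ => apply eval_det in H; auto; rewrite Hd in H; subst a0 end.
    auto.
  - intros [y Hy]. exists y. econstructor; [|exact Hy]. rewrite <- Hd. apply eval_den; auto.
Qed.

Lemma fin_choice (P : nat -> nat -> Prop) N :
  (forall k, k < N -> exists v, P k v) -> exists l, forall k, k < N -> P k (nth k l 0).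
Proof.
  induction N; intro H.
  - exists []. intros; lia.
  - destruct IHN as [l Hl]. { intros k Hk. apply H. lia. }
    destruct (H N (le_n _)) as [v Hv].
    exists (firstn N l ++ repeat 0 (N - length l) ++ [v]). intros k Hk.
    assert (Hlen : length (firstn N l ++ repeat 0 (N - length l)) = N).
    { rewrite length_app, repeat_length, length_firstn. lia. }
    rewrite app_assoc. destruct (Nat.eq_dec k N).
    + subst. rewrite app_nth2 by lia. rewrite Hlen, Nat.sub_diag. exact Hv.
    + rewrite app_nth1 by lia. specialize (Hl k ltac:(lia)).
      destruct (lt_dec k (length l)).
      * rewrite app_nth1 by (rewrite length_firstn; lia). rewrite nth_firstn.
        destruct (k <? N) eqn:E; [exact Hl|apply Nat.ltb_ge in E; lia].
      * rewrite app_nth2 by (rewrite length_firstn; lia). rewrite nth_repeat.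
        rewrite nth_overflow in Hl by lia. exact Hl.
Qed.

Lemma union_exists (g : nat -> nat) (bb : nat -> bool) N :
  exists D, forall t, Nat.testbit D t = true <-> exists k, k < N /\ bb k = true /\ Nat.testbit (g k) t = true.
Proof.
  induction N.
  - exists 0. intro t. rewrite Nat.bits_0. split; [discriminate|intros [k [Hk _]]; lia].
  - destruct IHN as [D HD]. exists (Nat.lor D (if bb N then g N else 0)). intro t.
    rewrite Nat.lor_spec, orb_true_iff, HD. split.
    + intros [[k [Hk H]]|H]; [exists k; split; auto; lia|].
      destruct (bb N) eqn:E; [|rewrite Nat.bits_0 in H; discriminate]. exists N. auto.
    + intros [k [Hk [H1 H2]]]. destruct (Nat.eq_dec k N).
      * subst. right. rewrite H1. auto.
      * left. exists k. split; auto. lia.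
Qed.

Lemma Gamma_comp a b Z : Gamma (compI a b) Z = Gamma b (Gamma a Z).
Proof.
  apply eset_ext. intro n. split.
  - intros [D [HW HD]]. unfold canon in HD. apply W_compI in HW. destruct HW as [w HW].
    apply KcE_spec in HW. destruct HW as [Hb Hk]. exists (p1 w). split.
    + apply W_iff_chk. exists (p1 (p2 w)). rewrite <- T_TCHK. exact Hb.
    + intros k Hkb. pose proof (testbit_lt _ _ Hkb) as Hlt. destruct (Hk k Hlt Hkb) as [Hs Ha].
      exists (p1 (lookF (p2 (p2 w)) k)). split.
      * apply W_iff_chk. eexists. rewrite <- T_TCHK. exact Ha.
      * intros t Ht. apply HD. apply Hs; auto. apply testbit_lt; auto.
  - intros [D2 [Hb Hk]]. unfold canon in Hk. apply W_iff_chk in Hb. destruct Hb as [wb Hwb].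
    destruct (fin_choice (fun k v => Nat.testbit D2 k = true ->
        chkP (lookF (p2 (p2 v))) (p1 (p2 v)) a (cpair k (p1 v)) /\
        forall t, Nat.testbit (p1 v) t = true -> Z t) D2) as [l Hl].
    { intros k _. destruct (Nat.testbit D2 k) eqn:E.
      - destruct (Hk k E) as [uk [HW Hs]]. apply W_iff_chk in HW. destruct HW as [wk Hwk].
        exists (cpair uk wk). rewrite p1_cpair, p2_cpair. auto.
      - exists 0. intro; discriminate. }
    destruct (union_exists (fun k => p1 (nth k l 0)) (fun k => Nat.testbit D2 k) D2) as [D HD].
    exists D. split.
    + apply W_compI. exists (cpair D2 (cpair wb (encenv l))). apply KcE_spec.
      rewrite !p1_cpair, !p2_cpair. split.
      * rewrite T_TCHK; rewrite ?p1_cpair, ?p2_cpair. exact Hwb.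
      * intros k Hk1 Hk2. rewrite lookF_encenv. destruct (Hl k Hk1 Hk2) as [HC _]. split.
        -- intros t _ Ht. apply HD. exists k. auto.
        -- rewrite T_TCHK; rewrite ?p1_cpair, ?p2_cpair. exact HC.
    + intros t Ht. unfold canon in Ht. apply HD in Ht. destruct Ht as [k [Hkk [H1 H2]]].
      destruct (Hl k Hkk H1) as [_ Hs]. auto.
Qed.

Definition iz := encode (Srch Ez).
Definition ipi := encode (Srch Epi).
Definition is_ := encode (Srch Es).
Definition is' := encode (Srch Es').
Definition ip := encode (Srch (Ep Fs)).
Definition iq := encode (Srch (Ep Sn)).

Lemma via_z A : eequiv_via A (join A (sing 0)) (cpair iz ipi).
Proof. exists iz, ipi. split; [reflexivity|]. split; [apply Gz|apply Gpi]. Qed.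

Lemma via_s A k : eequiv_via (join A (sing k)) (join A (sing (S k))) (cpair is_ is').
Proof. exists is_, is'. split; [reflexivity|]. split; [apply Gs|apply Gs']. Qed.

Lemma via_p A B i j : Gamma i A = B -> Gamma j B = A ->
  eequiv_via (join A (sing (cpair i j))) (join B (sing (cpair i j))) (cpair ip iq).
Proof.
  intros H1 H2. exists ip, iq. split; [reflexivity|]. split.
  - unfold ip. rewrite (Gp Fs p1 (fun e env => eq_refl)). rewrite p1_cpair, H1. reflexivity.
  - unfold iq. rewrite (Gp Sn p2 (fun e env => eq_refl)). rewrite p2_cpair, H2. reflexivity.
Qed.

Lemma via_eequiv A B z : eequiv_via A B z -> eequiv A B.
Proof. intros [i [j [_ [H1 H2]]]]. split; [exists j|exists i]; auto. Qed.

Lemma via_proj F G z : eequiv_via F G z -> Gamma (p1 z) F = G /\ Gamma (p2 z) G = F.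
Proof. intros [i [j [-> [H1 H2]]]]. rewrite p1_cpair, p2_cpair. auto. Qed.

Lemma closed_join X Y k : closed_eequiv X -> X Y -> X (join Y (sing k)).
Proof.
  intros Hc HY. induction k.
  - eapply Hc; [exact HY|]. eapply via_eequiv. apply via_z.
  - eapply Hc; [exact IHk|]. eapply via_eequiv. apply via_s.
Qed.

Section Main.
Variable X : eset -> Prop.
Variable f : eset -> eset.
Variable u : nat -> nat.
Hypothesis Hc : closed_eequiv X.
Hypothesis Hu : uniformity_function X f u.

Definition a0 := p1 (u (cpair iz ipi)).
Definition b0 := p2 (u (cpair iz ipi)).
Definition a1 := p1 (u (cpair is_ is')).
Definition b1 := p2 (u (cpair is_ is')).
Definition ap := p1 (u (cpair ip iq)).
Definition bp := p2 (u (cpair ip iq)).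

Definition G1 (c : nat) := iterF c a0 (fun _ r => compI r a1).
Definition Mid (c s : nat) := iterF c (compI (G1 c) s) (fun _ r => compI r b1).
Definition uu (c : nat) := cpair (compI (Mid c ap) b0) (compI (Mid c bp) b0).

Lemma step0 Y : X Y -> Gamma a0 (f Y) = f (join Y (sing 0)) /\ Gamma b0 (f (join Y (sing 0))) = f Y.
Proof.
  intro HY. unfold a0, b0. apply via_proj. apply Hu; [exact HY|apply closed_join; auto|apply via_z].
Qed.

Lemma stepS Y k : X Y -> Gamma a1 (f (join Y (sing k))) = f (join Y (sing (S k))) /\
                          Gamma b1 (f (join Y (sing (S k)))) = f (join Y (sing k)).
Proof.
  intro HY. unfold a1, b1. apply via_proj. apply Hu; [apply closed_join; auto|apply closed_join; auto|apply via_s].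
Qed.

Lemma stepP A B i j : X A -> X B -> Gamma i A = B -> Gamma j B = A ->
  Gamma ap (f (join A (sing (cpair i j)))) = f (join B (sing (cpair i j))) /\
  Gamma bp (f (join B (sing (cpair i j)))) = f (join A (sing (cpair i j))).
Proof.
  intros HA HB H1 H2. unfold ap, bp. apply via_proj.
  apply Hu; [apply closed_join; auto|apply closed_join; auto|apply via_p; auto].
Qed.

Lemma G1_spec Y k : X Y -> Gamma (G1 k) (f Y) = f (join Y (sing k)).
Proof.
  intro HY. induction k.
  - exact (proj1 (step0 Y HY)).
  - change (G1 (S k)) with (compI (G1 k) a1). rewrite Gamma_comp, IHk.
    exact (proj1 (stepS Y k HY)).
Qed.

Lemma Mid_spec Y Z c s : X Z -> Gamma s (f (join Y (sing c))) = f (join Z (sing c)) ->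
  Gamma (G1 c) (f Y) = f (join Y (sing c)) ->
  forall k, k <= c -> Gamma (iterF k (compI (G1 c) s) (fun _ r => compI r b1)) (f Y) = f (join Z (sing (c - k))).
Proof.
  intros HZ Hs HG. induction k; intro Hk.
  - cbn [iterF]. rewrite Gamma_comp, HG, Hs. rewrite Nat.sub_0_r. reflexivity.
  - change (iterF (S k) (compI (G1 c) s) (fun _ r => compI r b1))
      with (compI (iterF k (compI (G1 c) s) (fun _ r => compI r b1)) b1).
    rewrite Gamma_comp, IHk by lia.
    replace (c - k) with (S (c - S k)) by lia. exact (proj2 (stepS Z _ HZ)).
Qed.

Lemma uu_spec : uniformity_function X f uu.
Proof.
  intros A B i j HA HB [i' [j' [E [H1 H2]]]].
  apply cpair_inj in E. destruct E as [<- <-].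
  exists (compI (Mid (cpair i j) ap) b0), (compI (Mid (cpair i j) bp) b0).
  split; [reflexivity|]. split.
  - rewrite Gamma_comp. unfold Mid.
    rewrite (Mid_spec A B (cpair i j) ap HB (proj1 (stepP A B i j HA HB H1 H2)) (G1_spec A _ HA)) by lia.
    rewrite Nat.sub_diag. exact (proj2 (step0 B HB)).
  - rewrite Gamma_comp. unfold Mid.
    rewrite (Mid_spec B A (cpair i j) bp HA (proj2 (stepP A B i j HA HB H1 H2)) (G1_spec B _ HB)) by lia.
    rewrite Nat.sub_diag. exact (proj2 (step0 A HA)).
Qed.
End Main.

Definition EC (x : exp) : exp := Iter x (Cst (cpair 0 0)) (Pr (Cst 5) (Pr (Cst (cpair 1 0)) (Var 0))).

Lemma enc_comp f g : encode (CComp f g) = cpair 5 (cpair (encode f) (encode g)).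
Proof. reflexivity. Qed.
Lemma enc_pair f g : encode (CPair f g) = cpair 4 (cpair (encode f) (encode g)).
Proof. reflexivity. Qed.

Lemma ev_EC x env : evalx (EC x) env = encode (constc (evalx x env)).
Proof.
  unfold EC. cbn [evalx]. induction (evalx x env) as [|n IH]; [reflexivity|].
  cbn [iterF]. rewrite IH. cbn [evalx nth]. reflexivity.
Qed.

Definition CI (x y : exp) : exp :=
  Pr (Cst 5) (Pr (Cst (encode Kc)) (Pr (Cst 4) (Pr (Pr (Cst 4) (Pr (EC x) (EC y))) (Cst (encode CId))))).

Lemma ev_CI x y env : evalx (CI x y) env = compI (evalx x env) (evalx y env).
Proof.
  unfold CI, compI. cbn [evalx]. rewrite !ev_EC. rewrite enc_comp, !enc_pair. reflexivity.
Qed.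

Global Opaque CI compI a0 b0 a1 b1 ap bp iz ipi is_ is' ip iq.

Section U.
Variable u : nat -> nat.

Definition G1e := Iter (Var 0) (Cst (a0 u)) (CI (Var 0) (Cst (a1 u))).
Definition Mide (s : nat) := Iter (Var 0) (CI G1e (Cst s)) (CI (Var 0) (Cst (b1 u))).
Definition Ue := Pr (CI (Mide (ap u)) (Cst (b0 u))) (CI (Mide (bp u)) (Cst (b0 u))).

Lemma ev_Ue c : evalx Ue [c] = uu u c.
Proof.
  unfold Ue, uu, Mid, Mide, G1e, G1. cbn [evalx]. rewrite !ev_CI. cbn [evalx nth].
  rewrite !ev_CI. cbn [evalx nth].
  assert (E1 : forall init, iterF c init (fun m r => evalx (CI (Var 0) (Cst (b1 u))) [r; m; c])
                        = iterF c init (fun _ r => compI r (b1 u))).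
  { intro init. apply iterF_ext. intros m r. rewrite ev_CI. reflexivity. }
  assert (E2 : iterF c (a0 u) (fun m r => evalx (CI (Var 0) (Cst (a1 u))) [r; m; c])
                        = iterF c (a0 u) (fun _ r => compI r (a1 u))).
  { apply iterF_ext. intros m r. rewrite ev_CI. reflexivity. }
  rewrite (E1 (compI (iterF c (a0 u) (fun m r : nat => evalx (CI (Var 0) (Cst (a1 u))) [r; m; c])) (ap u))).
  rewrite (E1 (compI (iterF c (a0 u) (fun m r : nat => evalx (CI (Var 0) (Cst (a1 u))) [r; m; c])) (bp u))).
  rewrite E2. reflexivity.
Qed.

Definition Ucode := CComp (compile Ue) (CPair CId CZero).

Lemma Ucode_ok : computable (uu u).
Proof.
  exists Ucode. intro n.
  replace (uu u n) with (den Ucode n).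
  - apply eval_den. split; [apply mufree_compile|split; [apply mufree_aux|exact I]].
  - unfold Ucode. cbn [den]. rewrite den_CId. change (cpair n 0) with (encenv [n]).
    rewrite compile_correct. apply ev_Ue.
Qed.
End U.

Theorem lemma4p2 (X : eset -> Prop) (f : eset -> eset) :
  closed_eequiv X ->
  uniformly_e_invariant X f ->
  exists u : nat -> nat, computable u /\ uniformity_function X f u.
Proof.
  intros Hc [u Hu]. exists (uu u). split.
  - apply Ucode_ok.
  - apply uu_spec; auto.
Qed.
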